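(* Let $R$ be a quotient root system with base $S$, let $\Phi \subseteq R^+$, and let $I, J \in \mathrm{Gen}(\Phi)$. Then $I \cup J \in \mathrm{Gen}(\Phi)$ and $I \cap J \in \mathrm{Gen}(\Phi)$.
   Context: A quotient root system (QRS) $R$ is the set of non-zero images of a root system $\Delta$ (with base $\Sigma$) under the orthogonal projection of its ambient Euclidean space onto $(\mathrm{span}\,J_0)^\perp$ for some $J_0\subsetneq\Sigma$; its base $S$ consists of the images of $\Sigma\setminus J_0$, and every root is an integer combination of $S$ with all coefficients $\ge0$ (positive roots, $R^+$) or all $\le0$. For $K \subseteq S$: $R_K = R\cap\mathrm{span}\,K$, $R_K^+=R_K\cap R^+$; $\pi_K$ is orthogonal projection onto $(\mathrm{span}\,K)^\perp$, $R/K$ is the set of non-zero elements of $\pi_K(R)$ and $(R/K)^+=\pi_K(R^+)\setminus\{0\}$. Inflation: for $\Psi\subseteq(R/K)^+$, $X\subseteq R_K^+$, $\inf_K^S(\Psi,X):=\{\alpha\in R^+:\pi_K(\alpha)\in\Psi\}\cup X$. $\mathrm{Gen}(\Phi) := \{K\subseteq S : \Phi=\inf_K^S(\Theta,Y)\text{ for some }\Theta\subseteq (R/K)^+,\ Y\subseteq R_K^+\}$. *)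

(* Defs.v *)
From HB Require Import structures.
From mathcomp Require Import all_boot all_order all_algebra.
From mathcomp Require Import finmap.
From Stdlib Require Import ClassicalEpsilon.
Set Implicit Arguments. Unset Strict Implicit. Unset Printing Implicit Defensive.
Import Order.TTheory GRing.Theory Num.Theory.
Local Open Scope ring_scope.
Local Open Scope fset_scope.

Section QRS.
Variables (R : realFieldType) (n : nat).
Notation V := 'rV[R]_n.

Definition dot (u v : V) : R := (u *m v^T) 0 0.

Definition refl (a v : V) : V := v - (2 * dot v a / dot a a) *: a.

Definition is_intR (x : R) : Prop := exists z : int, x = z%:~R.

Definition in_span (W : {fset V}) (v : V) : Prop :=
  exists c : V -> R, v = \sum_(w <- W) c w *: w.

Definition lin_indep (W : {fset V}) : Prop :=
  forall c : V -> R, \sum_(w <- W) c w *: w = 0 -> forall w, w \in W -> c w = 0.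

Definition is_orthproj (W : {fset V}) (v p : V) : Prop :=
  in_span W (v - p) /\ forall w, w \in W -> dot p w = 0.
Definition orthproj (W : {fset V}) (v : V) : V :=
  epsilon (inhabits (0 : V)) (is_orthproj W v).

Definition is_root_system (D : {fset V}) : Prop :=
  [/\ (0 : V) \notin D,
      forall a b, a \in D -> b \in D -> refl a b \in D,
      forall a b, a \in D -> b \in D -> is_intR (2 * dot b a / dot a a)
    & forall a (c : R), a \in D -> c *: a \in D -> c = 1 \/ c = -1].

Definition nonneg_int_comb (W : {fset V}) (v : V) : Prop :=
  exists c : V -> int, v = \sum_(w <- W) (c w)%:~R *: w /\
                       forall w, w \in W -> (0 <= c w)%R.
Definition nonpos_int_comb (W : {fset V}) (v : V) : Prop :=
  exists c : V -> int, v = \sum_(w <- W) (c w)%:~R *: w /\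
                       forall w, w \in W -> (c w <= 0)%R.

Definition is_base (D Sig : {fset V}) : Prop :=
  [/\ Sig `<=` D, lin_indep Sig &
      forall a, a \in D -> nonneg_int_comb Sig a \/ nonpos_int_comb Sig a].

(* The quotient root system R determined by (D, Sig, J0) *)
Variables (D Sig J0 : {fset V}).

Definition qbase : {fset V} := [fset orthproj J0 s | s in Sig `\` J0].

Definition qroot (v : V) : Prop :=
  v != 0 /\ exists a, a \in D /\ v = orthproj J0 a.

Definition qpos (v : V) : Prop := qroot v /\ nonneg_int_comb qbase v.

Definition qpos_K (K : {fset V}) (v : V) : Prop := qpos v /\ in_span K v.

Definition quot_pos (K : {fset V}) (v : V) : Prop :=
  v != 0 /\ exists a, qpos a /\ v = orthproj K a.

Definition inflation (K : {fset V}) (Psi X : V -> Prop) (v : V) : Prop :=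
  (qpos v /\ Psi (orthproj K v)) \/ X v.

Definition in_Gen (Phi : V -> Prop) (K : {fset V}) : Prop :=
  K `<=` qbase /\
  exists (Theta Y : V -> Prop),
    (forall v, Theta v -> quot_pos K v) /\
    (forall v, Y v -> qpos_K K v) /\
    (forall v, Phi v <-> inflation K Theta Y v).

End QRS.

(* Main.v *)
Require Import Defs.
From HB Require Import structures.
From mathcomp Require Import all_boot all_order all_algebra.
From mathcomp Require Import finmap.
From mathcomp Require Import zify ring lra.
From Stdlib Require Import ClassicalEpsilon.
Set Implicit Arguments. Unset Strict Implicit. Unset Printing Implicit Defensive.
Import Order.TTheory GRing.Theory Num.Theory.
Local Open Scope fset_scope.
Local Open Scope ring_scope.

Section Basics.
Variables (R : realFieldType) (n : nat).
Local Notation V := 'rV[R]_n.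

Lemma dotE (u v : V) : dot u v = \sum_j u 0 j * v 0 j.
Proof. by rewrite /dot !mxE; apply: eq_bigr => j _; rewrite !mxE. Qed.

Lemma dotC (u v : V) : dot u v = dot v u.
Proof. by rewrite !dotE; apply: eq_bigr => j _; rewrite mulrC. Qed.

Lemma dotDl (u v w : V) : dot (u + v) w = dot u w + dot v w.
Proof. by rewrite !dotE -big_split; apply: eq_bigr => j _; rewrite !mxE mulrDl. Qed.

Lemma dotZl a (u w : V) : dot (a *: u) w = a * dot u w.
Proof. by rewrite !dotE mulr_sumr; apply: eq_bigr => j _; rewrite !mxE mulrA. Qed.

Lemma dot0l (w : V) : dot 0 w = 0.
Proof. by rewrite dotE big1 // => j _; rewrite mxE mul0r. Qed.

Lemma dotNl (u w : V) : dot (- u) w = - dot u w.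
Proof. by rewrite -scaleN1r dotZl mulN1r. Qed.
Lemma dotBl (u v w : V) : dot (u - v) w = dot u w - dot v w.
Proof. by rewrite dotDl dotNl. Qed.
Lemma dotDr (u v w : V) : dot w (u + v) = dot w u + dot w v.
Proof. by rewrite dotC dotDl !(dotC w). Qed.
Lemma dotZr a (u w : V) : dot w (a *: u) = a * dot w u.
Proof. by rewrite dotC dotZl dotC. Qed.
Lemma dot0r (w : V) : dot w 0 = 0.
Proof. by rewrite dotC dot0l. Qed.
Lemma dotNr (u w : V) : dot w (- u) = - dot w u.
Proof. by rewrite dotC dotNl dotC. Qed.
Lemma dotBr (u v w : V) : dot w (u - v) = dot w u - dot w v.
Proof. by rewrite dotDr dotNr. Qed.

Lemma dot_suml I (r : seq I) (P : pred I) (F : I -> V) w :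
  dot (\sum_(i <- r | P i) F i) w = \sum_(i <- r | P i) dot (F i) w.
Proof. by apply: (big_morph (fun u => dot u w)) => [u v|]; rewrite ?dotDl ?dot0l. Qed.
Lemma dot_sumr I (r : seq I) (P : pred I) (F : I -> V) w :
  dot w (\sum_(i <- r | P i) F i) = \sum_(i <- r | P i) dot w (F i).
Proof. by apply: (big_morph (fun u => dot w u)) => [u v|]; rewrite ?dotDr ?dot0r. Qed.

Lemma dot_ge0 (u : V) : 0 <= dot u u.
Proof. by rewrite dotE; apply: sumr_ge0 => j _; rewrite -expr2 sqr_ge0. Qed.

Lemma dot_eq0 (u : V) : dot u u = 0 -> u = 0.
Proof.
rewrite dotE => H; apply/rowP => j; rewrite mxE.
have H0 : forall i : 'I_n, predT i -> 0 <= u 0 i * u 0 i by move=> i _; rewrite -expr2 sqr_ge0.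
by have /eqP := psumr_eq0P H0 H (i := j) isT; rewrite mulf_eq0 orbb => /eqP.
Qed.

Lemma dot_gt0 (u : V) : u != 0 -> 0 < dot u u.
Proof.
move=> H; rewrite lt_def dot_ge0 andbT; apply/eqP => /dot_eq0 E; by rewrite E eqxx in H.
Qed.

Lemma span_seq (s : seq V) v : uniq s -> v \in <<s>>%VS ->
  exists c : V -> R, v = \sum_(w <- s) c w *: w.
Proof.
elim: s v => [|w s IH] v /=.
  by rewrite span_nil memv0 => _ /eqP ->; exists (fun _ => 0); rewrite big_nil.
move=> /andP[wNs us]; rewrite span_cons => /memv_addP[x /vlineP[k ->] [y /(IH _ us) [c ->] ->]].
exists (fun u => if u == w then k else c u); rewrite big_cons eqxx; congr (_ + _).
rewrite big_seq [RHS]big_seq; apply: eq_bigr => u us'; case: eqP => // uw.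
by move: wNs; rewrite -uw us'.
Qed.

Lemma spanE (W : {fset V}) v : in_span W v <-> v \in <<W>>%VS.
Proof.
split.
  move=> [c ->]; rewrite big_seq; apply: memv_suml => w Hw; apply: memvZ.
  exact: memv_span.
by move=> H; apply: span_seq => //; apply: fset_uniq.
Qed.

Lemma orth_span (s : seq V) p x : (forall w, w \in s -> dot p w = 0) ->
  x \in <<s>>%VS -> dot p x = 0.
Proof.
move=> H Hx; rewrite (coord_span (X := in_tuple s) Hx) dot_sumr big1 // => i _.
by rewrite dotZr H ?mulr0 // mem_nth.
Qed.

Lemma orth_exists (s : seq V) v :
  exists p, v - p \in <<s>>%VS /\ forall w, w \in s -> dot p w = 0.
Proof.
elim: s v => [|w s IH] v.
  by exists v; split; first by rewrite subrr mem0v.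
have [p [Hp1 Hp2]] := IH v; have [q [Hq1 Hq2]] := IH w.
have sub : (<<s>> <= <<w :: s>>)%VS by apply: sub_span => u us; rewrite inE us orbT.
have ws : w \in <<w :: s>>%VS by apply: memv_span; rewrite mem_head.
have [q0|qn0] := eqVneq q 0.
  exists p; split; first exact: (subvP sub).
  move=> u; rewrite inE => /orP[/eqP ->|us]; last exact: Hp2.
  by apply: (orth_span Hp2); rewrite -[w]subr0 -q0.
set t := dot p q / dot q q.
have Hp' : forall u, u \in s -> dot (p - t *: q) u = 0.
  by move=> u us; rewrite dotBl dotZl Hp2 // Hq2 // mulr0 subrr.
exists (p - t *: q); split.
  have -> : v - (p - t *: q) = (v - p) + t *: (w - (w - q)).
    by rewrite subKr opprB addrCA addrC.
  apply: memvD; first exact: (subvP sub).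
  by apply: memvZ; apply: memvB => //; apply: (subvP sub).
move=> u; rewrite inE => /orP[/eqP ->|us]; last exact: Hp'.
have -> : w = (w - q) + q by rewrite subrK.
rewrite dotDr (orth_span Hp' Hq1) add0r dotBl dotZl /t mulfVK ?subrr //.
by rewrite gt_eqF ?dot_gt0.
Qed.

Lemma is_orthprojE (W : {fset V}) v p : is_orthproj W v p <->
  (v - p \in <<W>>%VS /\ forall w, w \in W -> dot p w = 0).
Proof. by rewrite /is_orthproj; split => -[H1 H2]; split => //; apply/spanE. Qed.

Lemma orthproj_spec (W : {fset V}) v : is_orthproj W v (orthproj W v).
Proof.
rewrite /orthproj; apply: epsilon_spec.
have [p [H1 H2]] := orth_exists W v; exists p; exact/is_orthprojE.
Qed.

Lemma orthproj_uniq (W : {fset V}) v p : is_orthproj W v p -> orthproj W v = p.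
Proof.
move=> /is_orthprojE [H1 H2]; have /is_orthprojE [H3 H4] := orthproj_spec W v.
move: H3 H4; set q := orthproj W v => H3 H4.
apply/eqP; rewrite -subr_eq0; apply/eqP/dot_eq0.
have Hd : q - p \in <<W>>%VS.
  have E : (v - p) - (v - q) = q - p by rewrite opprB addrC addrA subrK.
  rewrite -E; exact: memvB.
by rewrite dotBl (orth_span H4 Hd) (orth_span H2 Hd) subrr.
Qed.

Lemma proj_res (W : {fset V}) x : x - orthproj W x \in <<W>>%VS.
Proof. by have /is_orthprojE[] := orthproj_spec W x. Qed.

Lemma proj_orth (W : {fset V}) x w : w \in W -> dot (orthproj W x) w = 0.
Proof. by have /is_orthprojE[_ H] := orthproj_spec W x; apply: H. Qed.

Lemma proj_lin (W : {fset V}) a u v :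
  orthproj W (a *: u + v) = a *: orthproj W u + orthproj W v.
Proof.
apply: orthproj_uniq; apply/is_orthprojE; split.
  have -> : a *: u + v - (a *: orthproj W u + orthproj W v) =
            a *: (u - orthproj W u) + (v - orthproj W v).
    by rewrite scalerBr opprD addrACA.
  by apply: memvD; [apply: memvZ|]; apply: proj_res.
by move=> w Hw; rewrite dotDl dotZl !proj_orth // mulr0 addr0.
Qed.

Lemma proj0 (W : {fset V}) : orthproj W 0 = 0.
Proof.
apply: orthproj_uniq; apply/is_orthprojE; split; first by rewrite subr0 mem0v.
by move=> w _; rewrite dot0l.
Qed.

Lemma projD (W : {fset V}) u v : orthproj W (u + v) = orthproj W u + orthproj W v.
Proof. by move: (proj_lin W 1 u v); rewrite !scale1r. Qed.
Lemma projZ (W : {fset V}) a u : orthproj W (a *: u) = a *: orthproj W u.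
Proof. by move: (proj_lin W a u 0); rewrite !addr0 proj0 addr0. Qed.
Lemma projN (W : {fset V}) u : orthproj W (- u) = - orthproj W u.
Proof. by rewrite -scaleN1r projZ scaleN1r. Qed.
Lemma projB (W : {fset V}) u v : orthproj W (u - v) = orthproj W u - orthproj W v.
Proof. by rewrite projD projN. Qed.
Lemma proj_sum (W : {fset V}) I (r : seq I) (P : pred I) (F : I -> V) :
  orthproj W (\sum_(i <- r | P i) F i) = \sum_(i <- r | P i) orthproj W (F i).
Proof. exact: (big_morph _ (projD W) (proj0 W)). Qed.

Lemma proj_eq0 (W : {fset V}) x : orthproj W x = 0 <-> x \in <<W>>%VS.
Proof.
split => [E|H]; first by have := proj_res W x; rewrite E subr0.
apply: orthproj_uniq; apply/is_orthprojE; split; first by rewrite subr0.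
by move=> w _; rewrite dot0l.
Qed.

Lemma proj_eqE (W : {fset V}) u v : orthproj W u = orthproj W v <-> u - v \in <<W>>%VS.
Proof.
rewrite -proj_eq0 projB; split => [->|/eqP]; first by rewrite subrr.
by rewrite subr_eq0 => /eqP.
Qed.

End Basics.

Section QRS.
Variables (R : realFieldType) (n : nat).
Local Notation V := 'rV[R]_n.
Variables (D Sig J0 : {fset V}).
Hypothesis HD : is_root_system D.
Hypothesis HB : is_base D Sig.
Hypothesis HJ0 : J0 `<` Sig.

Lemma root_neq0 a : a \in D -> a != 0.
Proof. by case: HD => H0 _ _ _ aD; apply: contraNneq H0 => <-. Qed.

Lemma dot_root a : a \in D -> dot a a != 0.
Proof. by move=> /root_neq0 /dot_gt0 /gt_eqF ->. Qed.

Lemma rootN a : a \in D -> - a \in D.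
Proof.
move=> aD; case: HD => _ Hr _ _; have := Hr a a aD aD.
rewrite /refl mulfK ?dot_root //.
by rewrite scaler_nat mulr2n opprD addrA subrr sub0r.
Qed.

Lemma int_cases (x : R) : is_intR x -> 0 < x -> x = 1 \/ 2 <= x.
Proof.
move=> [z ->]; rewrite ltr0z => z0.
have [->|H] : z = 1 \/ 2 <= z by lia.
  by left.
by right; rewrite (ler_int R 2 z).
Qed.

Lemma rootB a b : a \in D -> b \in D -> 0 < dot a b -> a != b -> a - b \in D.
Proof.
move=> aD bD ab anb; case: HD => _ Hr Hi _.
have bb := dot_gt0 (root_neq0 bD); have aa := dot_gt0 (root_neq0 aD).
have m1 : 0 < 2 * dot a b / dot b b by rewrite divr_gt0 ?mulr_gt0.
have m2 : 0 < 2 * dot b a / dot a a by rewrite dotC divr_gt0 ?mulr_gt0.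
case: (int_cases (Hi _ _ bD aD) m1) => [E|E1].
  by have := Hr _ _ bD aD; rewrite /refl E scale1r.
case: (int_cases (Hi _ _ aD bD) m2) => [E|E2].
  by have := Hr _ _ aD bD; rewrite /refl E scale1r => /rootN; rewrite opprB.
exfalso; move/negP: anb; apply; rewrite -subr_eq0; apply/eqP/dot_eq0.
apply/eqP; rewrite eq_le dot_ge0 andbT.
rewrite dotBl !dotBr (dotC b a).
rewrite ler_pdivlMr // in E1; rewrite dotC ler_pdivlMr // in E2.
lra.
Qed.

Lemma rootD a b : a \in D -> b \in D -> dot a b < 0 -> a != - b -> a + b \in D.
Proof.
move=> aD bD ab anb; rewrite -[b]opprK; apply: rootB => //; first exact: rootN.
by rewrite dotNr oppr_gt0.
Qed.

Lemma free_eq (W : {fset V}) c d : lin_indep W ->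
  \sum_(w <- W) c w *: w = \sum_(w <- W) d w *: w -> forall w, w \in W -> c w = d w.
Proof.
move=> HW E w wW; apply/eqP; rewrite -subr_eq0; apply/eqP.
apply: (HW (fun w => c w - d w)) => //.
by rewrite (eq_bigr _ (fun w _ => scalerBl _ _ _)) sumrB E subrr.
Qed.

Lemma sum_ext (A W : {fset V}) (c : V -> R) : A `<=` W ->
  \sum_(w <- A) c w *: w = \sum_(w <- W) (if w \in A then c w else 0) *: w.
Proof.
move=> AW; rewrite [LHS]big_seq (eq_bigr (fun w => (if w \in A then c w else 0) *: w)); last first.
  by move=> w ->.
rewrite -big_seq; apply: big_fset_incl => // x _ /negbTE ->; by rewrite scale0r.
Qed.

Lemma SigD s : s \in Sig -> s \in D.
Proof. by case: HB => /fsubsetP H _ _; apply: H. Qed.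

Lemma Sig_free : lin_indep Sig.
Proof. by case: HB. Qed.

Lemma supp (A : {fset V}) (c : V -> R) x : A `<=` Sig -> x \in <<A>>%VS ->
  x = \sum_(w <- Sig) c w *: w -> forall s, s \in Sig -> s \notin A -> c s = 0.
Proof.
move=> AS /spanE [e Ex] Ex' s sS sA.
have := free_eq Sig_free (etrans (esym Ex') (etrans Ex (sum_ext _ AS))) sS.
by rewrite (negbTE sA).
Qed.

Lemma root_coef a : a \in D -> exists c : V -> int,
  a = \sum_(w <- Sig) (c w)%:~R *: w /\
  ((forall w, w \in Sig -> 0 <= c w) \/ (forall w, w \in Sig -> c w <= 0)).
Proof.
case: HB => _ _ H aD; case: (H a aD) => [[c [E P]]|[c [E P]]]; exists c; split => //.
  by left. by right.
Qed.

Lemma sum_delta (W : {fset V}) s : s \in W -> \sum_(w <- W) ((w == s)%:R : R) *: w = s.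
Proof.
move=> sW; rewrite (bigD1_seq s) //= ?fset_uniq // eqxx scale1r big1 ?addr0 //.
by move=> w /negbTE ->; rewrite scale0r.
Qed.

Lemma sum_shift (c : V -> int) s (k : int) : s \in Sig ->
  \sum_(w <- Sig) (c w + k * (w == s)%:R)%:~R *: w =
  \sum_(w <- Sig) (c w)%:~R *: w + k%:~R *: s.
Proof.
move=> sS; rewrite -[in RHS](sum_delta sS) scaler_sumr -big_split /=; apply: eq_bigr => w _.
rewrite rmorphD rmorphM /= scalerDl scalerA; congr (_ + _); congr (_ *: _); congr (_ * _).
by case: (w == s); rewrite ?rmorph1 ?rmorph0.
Qed.

Lemma sum_diff (cg cd : V -> int) :
  \sum_(w <- Sig) (cg w)%:~R *: w - \sum_(w <- Sig) (cd w)%:~R *: w =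
  \sum_(w <- Sig) (cg w - cd w)%:~R *: w.
Proof. by rewrite -sumrB; apply: eq_bigr => w _; rewrite -scalerBl -rmorphB. Qed.

Lemma meas_dec (e : V -> int) s : s \in Sig -> 0 < e s ->
  (\sum_(w <- Sig) `|e w - (w == s)%:R|%N).+1 = \sum_(w <- Sig) `|e w|%N.
Proof.
move=> sS es; rewrite (bigD1_seq s) ?fset_uniq //= [RHS](bigD1_seq s) ?fset_uniq //= eqxx.
rewrite (eq_bigr (fun w => `|e w|%N)); last by move=> w /negbTE ->; rewrite subr0.
rewrite -addSn; congr (_ + _)%N; lia.
Qed.

Lemma core (L : {fset V}) (Q : V -> Prop) a :
  L `<=` Sig -> a \in D -> a \notin <<L>>%VS ->
  (forall g s, g \in D -> g + s \in D -> s \in L -> g - a \in <<L>>%VS ->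
     (Q g <-> Q (g + s))) ->
  forall b, b \in D -> b - a \in <<L>>%VS -> (Q a <-> Q b).
Proof.
move=> LS aD aL Hstep b bD ba.
have [ca [Ea _]] := root_coef aD; have [cb [Eb _]] := root_coef bD.
suff H : forall N g d (cg cd : V -> int), g \in D -> d \in D ->
    g - a \in <<L>>%VS -> d - a \in <<L>>%VS ->
    g = \sum_(w <- Sig) (cg w)%:~R *: w -> d = \sum_(w <- Sig) (cd w)%:~R *: w ->
    (\sum_(w <- Sig) `|cg w - cd w|%N <= N)%N -> (Q g <-> Q d).
  by apply: (H _ a b ca cb) => //; rewrite subrr mem0v.
have notL : forall g, g - a \in <<L>>%VS -> g \notin <<L>>%VS.
  move=> g ga; apply: contra aL => gL.
  have -> : a = g - (g - a) by rewrite subKr.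
  exact: memvB.
have LsL : forall s, s \in L -> s \in <<L>>%VS by move=> s sL; apply: memv_span.
elim=> [|N IH] g d cg cd gD dD ga da Eg Ed HN.
  have -> : g = d; last by [].
  rewrite Eg Ed; apply: eq_big_seq => w wS; congr (_ *: _).
  move: HN; rewrite leqn0 sum_nat_seq_eq0 => /allP /(_ w wS) /=.
  by move=> /eqP H; congr (_%:~R); lia.
have [->|gnd] := eqVneq g d; first by [].
have step : forall g d (cg cd : V -> int) s, g \in D -> d \in D ->
    g - a \in <<L>>%VS -> d - a \in <<L>>%VS ->
    g = \sum_(w <- Sig) (cg w)%:~R *: w -> d = \sum_(w <- Sig) (cd w)%:~R *: w ->
    (\sum_(w <- Sig) `|cg w - cd w|%N <= N.+1)%N ->
    s \in L -> s \in Sig -> 0 < cg s - cd s -> 0 < dot s (g - d) -> (Q g <-> Q d).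
  clear gD dD ga da Eg Ed HN gnd g d cg cd; move=> g d cg cd s gD dD ga da Eg Ed HN sL sS es ds.
  have Hdec := meas_dec (e := fun w => cg w - cd w) sS es.
  rewrite dotBr in ds.
  have [gs|gs] := ltP 0 (dot g s).
    have gns : g != s by apply: contraNneq (notL _ ga) => ->; apply: LsL.
    have g'D : g - s \in D by apply: rootB => //; apply: SigD.
    have g'a : g - s - a \in <<L>>%VS.
      by rewrite addrAC; apply: memvB => //; apply: LsL.
    have E1 := Hstep (g - s) s g'D; rewrite subrK in E1.
    have {}E1 := E1 gD sL g'a.
    rewrite -E1; apply: (IH _ _ (fun w => (cg w + (-1) * (w == s)%:R)%R) cd) => //.
      by rewrite sum_shift // -Eg scaleN1r.
    rewrite (eq_bigr (fun w => absz (cg w - cd w - (w == s)%:R)%R)); last first.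
      by move=> w _; congr (absz _); ring.
    by move: HN; rewrite -Hdec ltnS.
  have dsn : dot d s < 0 by rewrite dotC; rewrite dotC in gs; lra.
  have dns : d != - s.
    apply: contraNneq (notL _ da) => ->; rewrite memvN; exact: LsL.
  have d'D : d + s \in D by apply: rootD => //; apply: SigD.
  have E1 := Hstep _ _ dD d'D sL da.
  rewrite E1; apply: (IH _ _ cg (fun w => (cd w + 1 * (w == s)%:R)%R)) => //.
      by rewrite addrAC; apply: memvD => //; apply: LsL.
    by rewrite sum_shift // -Ed scale1r.
  rewrite (eq_bigr (fun w => absz (cg w - cd w - (w == s)%:R)%R)); last first.
    by move=> w _; congr (absz _); ring.
  by move: HN; rewrite -Hdec ltnS.
set e := fun w => cg w - cd w.
have Ex : g - d = \sum_(w <- Sig) (e w)%:~R *: w by rewrite Eg Ed sum_diff.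
have xL : g - d \in <<L>>%VS.
  have E : (g - a) - (d - a) = g - d by rewrite opprB addrA subrK.
  rewrite -E; exact: memvB.
have xx : 0 < dot (g - d) (g - d) by apply: dot_gt0; rewrite subr_eq0.
have [s sS Hs] : exists2 s, s \in Sig & 0 < (e s)%:~R * dot s (g - d).
  case: (boolP (has (fun s => 0 < (e s)%:~R * dot s (g - d)) Sig)) => [/hasP[s ? ?]|/hasPn H].
    by exists s.
  exfalso; move: xx; rewrite {1}Ex dot_suml.
  rewrite big_seq; apply/negP; rewrite -leNgt; apply: sumr_le0 => w /H.
  by rewrite dotZl dotC leNgt.
have sL : s \in L.
  apply: contraTT Hs => sL.
  by have := (supp LS xL Ex sS sL); move=> ->; rewrite mul0r ltxx.
have [es|es|es] := ltgtP (e s) 0.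
- have e' : 0 < cd s - cg s by rewrite -opprB oppr_gt0.
  have ds : 0 < dot s (d - g).
    by move: Hs; rewrite nmulr_rgt0 ?ltr0z ?ltrz0 // -oppr_gt0 -dotNr opprB.
  symmetry; apply: (step d g cd cg s) => //.
  by rewrite (eq_bigr (fun w => `|cg w - cd w|%N)) // => w _; rewrite -opprB abszN.
- apply: (step g d cg cd s) => //.
  by move: Hs; rewrite pmulr_rgt0 // ltr0z.
- by move: Hs; rewrite es mul0r ltxx.
Qed.

Local Notation pi := (orthproj J0).
Local Notation qb := (qbase Sig J0).

Lemma J0Sig : J0 `<=` Sig. Proof. exact: fproper_sub HJ0. Qed.

Lemma pi_J0 s : s \in J0 -> pi s = 0.
Proof. by move=> sJ; apply/proj_eq0; apply: memv_span. Qed.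

Lemma pi_inj : {in Sig `\` J0 &, injective pi}.
Proof.
move=> s t; rewrite !in_fsetD => /andP[sJ sS] /andP[tJ tS] /proj_eqE H.
have E : s - t = \sum_(w <- Sig) ((w == s)%:R - (w == t)%:R) *: w.
  by rewrite (eq_bigr _ (fun w _ => scalerBl _ _ _)) sumrB !sum_delta.
have := supp J0Sig H E sS sJ; rewrite /= eqxx => H1.
apply/eqP; apply/negPn/negP => st; move: H1; rewrite (negbTE st) subr0.
by apply/eqP; exact: oner_neq0.
Qed.

Lemma qb_mem k : k \in qb -> exists2 s, s \in Sig `\` J0 & k = pi s.
Proof. by move=> /imfsetP[s Hs ->]; exists s. Qed.

Lemma qb_sum (F : V -> V) : \sum_(k <- qb) F k = \sum_(s <- Sig `\` J0) F (pi s).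
Proof. by rewrite /qbase big_imfset //=; exact: pi_inj. Qed.

Lemma qb_free : lin_indep qb.
Proof.
move=> e He k kq; have [s sA ->] := qb_mem kq.
rewrite qb_sum in He.
have H0 : pi (\sum_(s <- Sig `\` J0) e (pi s) *: s) = 0.
  by rewrite proj_sum -[RHS]He; apply: eq_bigr => w _; rewrite projZ.
move/proj_eq0 : H0 => H0.
have := supp J0Sig H0 (sum_ext _ (fsubsetDl Sig J0)) (s := s).
move: (sA); rewrite in_fsetD => /andP[sJ sS] /(_ sS sJ).
by rewrite sJ sS.
Qed.

Lemma nc_pi (c : V -> int) x : x = \sum_(w <- Sig) (c w)%:~R *: w ->
  (forall w, w \in Sig -> 0 <= c w) -> nonneg_int_comb qb (pi x).
Proof.
move=> Ex Hc.
exists (fun k => \sum_(s <- Sig `\` J0 | pi s == k) c s); split; last first.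
  move=> k _; rewrite big_seq_cond; apply: sumr_ge0 => s /andP[].
  by rewrite in_fsetD => /andP[_ sS] _; exact: Hc.
rewrite Ex proj_sum -(big_fset_incl _ (fsubsetDl Sig J0)); last first.
  move=> w wS; rewrite in_fsetD wS andbT negbK => wJ.
  by rewrite projZ pi_J0 // scaler0.
rewrite (partition_big_imfset _ pi) /=; rewrite /qbase.
apply: eq_bigr => k _; rewrite rmorph_sum scaler_suml.
by apply: eq_bigr => i /eqP <-; rewrite projZ.
Qed.

Lemma lift_pos al : qpos D Sig J0 al -> exists a (c : V -> int),
  [/\ a \in D, a = \sum_(w <- Sig) (c w)%:~R *: w,
      (forall w, w \in Sig -> 0 <= c w) & pi a = al].
Proof.
move=> [[aln0 [a0 [a0D Ea0]]] [cal [Eal Hal]]].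
have [c [Ec [Hc|Hc]]] := root_coef a0D.
  by exists a0, c; split.
exfalso; move/eqP: aln0; apply.
have Hn : nonneg_int_comb qb (pi (- a0)).
  apply: (nc_pi (c := fun w => - c w)).
    by rewrite Ec -sumrN; apply: eq_bigr => w _; rewrite rmorphN scaleNr.
  by move=> w wS; rewrite oppr_ge0 Hc.
case: Hn => [d [Ed Hd]]; rewrite projN -Ea0 in Ed.
have H0 : \sum_(k <- qb) ((cal k + d k)%:~R : R) *: k = 0.
  rewrite (eq_bigr (fun k => (cal k)%:~R *: k + (d k)%:~R *: k)); last first.
    by move=> k _; rewrite rmorphD scalerDl.
  by rewrite big_split /= -Eal -Ed subrr.
have H1 := qb_free H0.
rewrite Eal big_seq big1 // => k kq.
have := H1 k kq; move/eqP; rewrite intr_eq0 => /eqP E.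
have : cal k = 0 by have := Hal k kq; have := Hd k kq; lia.
by move=> ->; rewrite scale0r.
Qed.

Definition PK (Phi : V -> Prop) (K : {fset V}) :=
  forall al be, qpos D Sig J0 al -> qpos D Sig J0 be ->
  orthproj K al = orthproj K be -> orthproj K al != 0 -> Phi al -> Phi be.

Lemma gen_iff Phi K : (forall v, Phi v -> qpos D Sig J0 v) ->
  in_Gen D Sig J0 Phi K <-> (K `<=` qb /\ PK Phi K).
Proof.
move=> HPhi; split.
  move=> [KS [Th [Y [HTh [HY HE]]]]]; split => // al be qal qbe Eab aln0 Phal.
  case: ((HE al).1 Phal) => [[_ Tal]|Yal].
    by apply/(HE be).2; left; split => //; rewrite -Eab.
  have [_ /spanE /proj_eq0 H] := HY _ Yal.
  by rewrite H eqxx in aln0.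
move=> [KS HP]; split => //.
exists (fun v => v != 0 /\ exists al, Phi al /\ v = orthproj K al),
       (fun v => Phi v /\ in_span K v); split; [|split].
- move=> v [vn0 [al [Phal Ev]]]; split => //; exists al; split => //; exact: HPhi Phal.
- move=> v [Phv Hv]; split => //; exact: HPhi Phv.
- move=> v; split.
    move=> Phv; case: (eqVneq (orthproj K v) 0) => [/proj_eq0 /spanE H|H].
      by right.
    left; split; first exact: HPhi Phv.
    by split => //; exists v.
  case=> [[qv [vn0 [al [Phal Eal]]]]|[] //].
  apply: (HP al v); [exact: HPhi Phal|done|by rewrite Eal|by rewrite -Eal|done].
Qed.

Lemma span_cap (I J : {fset V}) x : I `<=` qb -> J `<=` qb ->
  x \in <<I>>%VS -> x \in <<J>>%VS -> x \in <<I `&` J>>%VS.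
Proof.
move=> Iq Jq /spanE[e Ee] /spanE[f Ef].
have E := etrans (esym (etrans Ee (sum_ext _ Iq))) (etrans Ef (sum_ext _ Jq)).
have H := free_eq qb_free E.
apply/spanE; exists e; rewrite Ee.
symmetry; apply: big_fset_incl; first exact: fsubsetIl.
move=> k kI kIJ; have := H k (fsubsetP Iq k kI); rewrite kI.
have kJ : k \notin J by move: kIJ; rewrite in_fsetI kI.
by rewrite (negbTE kJ) => ->; rewrite scale0r.
Qed.

Lemma inter_case Phi (I J : {fset V}) : I `<=` qb -> J `<=` qb ->
  PK Phi I -> PK Phi J -> PK Phi (I `&` J).
Proof.
move=> Iq Jq HI HJ al be qal qbe /proj_eqE Hab aln0 Phal.
have IJI : (<<I `&` J>> <= <<I>>)%VS by apply: sub_span => k; rewrite in_fsetI => /andP[].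
have IJJ : (<<I `&` J>> <= <<J>>)%VS by apply: sub_span => k; rewrite in_fsetI => /andP[].
case: (eqVneq (orthproj I al) 0) => [/proj_eq0 alI|alI].
  case: (eqVneq (orthproj J al) 0) => [/proj_eq0 alJ|alJ].
    by move: aln0; rewrite (proj_eq0 _ _).2 ?eqxx //; apply: span_cap.
  by apply: (HJ al) => //; apply/proj_eqE; apply: (subvP IJJ).
by apply: (HI al) => //; apply/proj_eqE; apply: (subvP IJI).
Qed.

Lemma union_case Phi (I J : {fset V}) : I `<=` qb -> J `<=` qb ->
  PK Phi I -> PK Phi J -> PK Phi (I `|` J).
Proof.
move=> Iq Jq HI HJ al be qal qbe Eab aln0 Phal.
set U := I `|` J.
have Uq : U `<=` qb by rewrite fsubUset Iq Jq.
set L := [fset s in Sig | (s \in J0) || (pi s \in U)].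
have LS : L `<=` Sig by apply/fsubsetP => s; rewrite !inE => /andP[].
have J0L : (<<J0>> <= <<L>>)%VS.
  apply: sub_span => s sJ; rewrite !inE sJ /= andbT.
  exact: (fsubsetP J0Sig).
have F1 : forall x, x \in <<L>>%VS -> pi x \in <<U>>%VS.
  move=> x /spanE [c ->]; rewrite proj_sum big_seq; apply: memv_suml => s sL.
  rewrite projZ; apply: memvZ; move: sL; rewrite !inE => /andP[_ /orP[sJ|sU]].
    by rewrite pi_J0 // mem0v.
  by apply: memv_span; move: sU; rewrite /U !inE.
have UL : (<<U>> <= <<L>>)%VS.
  apply/span_subvP => k kU; have [s sA Ek] := qb_mem (fsubsetP Uq k kU).
  move: sA; rewrite in_fsetD => /andP[sJ sS].
  have sL : s \in L by rewrite !inE sS /= -Ek; move: kU; rewrite /U !inE => ->; rewrite orbT.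
  have -> : k = s - (s - pi s) by rewrite subKr.
  apply: memvB; first exact: memv_span.
  exact: (subvP J0L _ (proj_res J0 s)).
have F2 : forall x, pi x \in <<U>>%VS -> x \in <<L>>%VS.
  move=> x /(subvP UL) H; have -> : x = pi x + (x - pi x) by rewrite addrC subrK.
  by apply: memvD => //; apply: (subvP J0L); apply: proj_res.
have [a [ca [aD Ea Hca Epa]]] := lift_pos qal.
case: (qbe) => [[_ [b [bD Eb]]] _].
have aL : a \notin <<L>>%VS.
  apply/negP => /F1; rewrite Epa => /proj_eq0 H.
  by rewrite H eqxx in aln0.
have baL : b - a \in <<L>>%VS.
  apply: F2; rewrite projB -Eb Epa; apply/proj_eqE; exact: esym Eab.
have fib : forall g, g \in D -> g - a \in <<L>>%VS ->
    qpos D Sig J0 (pi g) /\ orthproj U (pi g) = orthproj U al.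
  move=> g gD ga.
  have E1 : orthproj U (pi g) = orthproj U al.
    by apply/proj_eqE; rewrite -Epa -projB; apply: F1.
  split => //.
  have pgn0 : pi g != 0.
    apply/eqP => pg0; move: aln0; by rewrite -E1 pg0 proj0 eqxx.
  split; first by split => //; exists g.
  have [cg [Eg [Hcg|Hcg]]] := root_coef gD; first exact: nc_pi Eg Hcg.
  exfalso.
  have [s [sS sL cs]] : exists s, [/\ s \in Sig, s \notin L & ca s != 0].
    case: (boolP (has (fun s => (s \notin L) && (ca s != 0)) Sig)).
      by move=> /hasP[s sS /andP[? ?]]; exists s.
    move=> /hasPn H; exfalso; move/negP: aL; apply; rewrite Ea big_seq; apply: memv_suml => s sS.
    have := H s sS; rewrite negb_and !negbK => /orP[sL|/eqP->].
      by apply: memvZ; apply: memv_span.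
    by rewrite scale0r mem0v.
  have Ega : g - a = \sum_(w <- Sig) (cg w - ca w)%:~R *: w by rewrite Eg Ea sum_diff.
  have := supp LS ga Ega sS sL; move/eqP; rewrite intr_eq0 subr_eq0 => /eqP E.
  have h1 := Hcg s sS; have h2 := Hca s sS; rewrite E in h1.
  by move/negP: cs; apply; rewrite eq_le h1 h2.
have Hstep : forall g s, g \in D -> g + s \in D -> s \in L -> g - a \in <<L>>%VS ->
    (Phi (pi g) <-> Phi (pi (g + s))).
  move=> g s gD gsD sL ga.
  have [qg Eg] := fib g gD ga.
  have gsa : g + s - a \in <<L>>%VS.
    by rewrite addrAC; apply: memvD => //; apply: memv_span.
  have [qgs Egs] := fib _ gsD gsa.
  have side : forall K, K `<=` U -> PK Phi K -> pi s \in K ->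
      (Phi (pi g) <-> Phi (pi (g + s))).
    move=> K KU HK psK.
    have EK : orthproj K (pi g) = orthproj K (pi (g + s)).
      apply/proj_eqE; rewrite projD opprD addrA subrr sub0r memvN.
      exact: memv_span.
    have nK : orthproj K (pi g) != 0.
      apply/eqP => /proj_eq0 H; move: aln0; rewrite -Eg; apply/negP; rewrite negbK.
      apply/eqP/proj_eq0; apply: (subvP _ _ H); apply: sub_span => k kK.
      exact: (fsubsetP KU).
    split; first by apply: HK.
    by apply: HK => //; rewrite -EK.
  move: sL; rewrite !inE => /andP[sS /orP[sJ|/orP[psI|psJ]]].
    by rewrite projD (pi_J0 sJ) addr0.
    by apply: (side I) => //; apply: fsubsetUl.
  by apply: (side J) => //; apply: fsubsetUr.
have := core LS aD aL Hstep bD baL.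
by rewrite Epa -Eb => H; apply/H.
Qed.

End QRS.

Theorem proposition3p11 (R : realFieldType) (n : nat)
    (D Sig J0 : {fset 'rV[R]_n}) (Phi : 'rV[R]_n -> Prop)
    (I J : {fset 'rV[R]_n}) :
  is_root_system D -> is_base D Sig -> J0 `<` Sig ->
  (forall v, Phi v -> qpos D Sig J0 v) ->
  in_Gen D Sig J0 Phi I -> in_Gen D Sig J0 Phi J ->
  in_Gen D Sig J0 Phi (I `|` J) /\ in_Gen D Sig J0 Phi (I `&` J).
Proof.
move=> HD HB HJ0 HPhi HI HJ.
have [Iq PI] := (gen_iff I HPhi).1 HI.
have [Jq PJ] := (gen_iff J HPhi).1 HJ.
split; apply/(gen_iff _ HPhi); split.
- by rewrite fsubUset Iq Jq.
- exact: (union_case HD HB HJ0).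
- exact: fsubset_trans (fsubsetIl I J) Iq.
- exact: (inter_case HB HJ0).
Qed.
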